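(* Let $X$ be a CAT(0) space, $C\subseteq X$ a totally bounded subset with II-modulus of total boundedness $\gamma$ and $b>0$ an upper bound on the diameter of $C$, $\lambda\in(0,1)$, and $T:C\to C$ a $\lambda$-firmly nonexpansive mapping with $\mathrm{Fix}(T)\ne\emptyset$. Let $x\in C$ and $x_n:=T^nx$. Then for all $k\in\mathbb{N}$ and $g:\mathbb{N}\to\mathbb{N}$ there exists $N\le\Theta_0(\gamma^M(4k+3))+K$ such that for all $i,j\in[N,N+g(N)]$ and all $m\ge N$: $d(x_i,x_j)\le\frac1{k+1}$ and $d(x_m,Tx_m)\le\frac1{k+1}$. Here $c=\left\lceil\frac{8(b+1)^2}{\lambda(1-\lambda)}\right\rceil$, $K=c(k+1)^2$, $\Theta_0(0)=0$ and $\Theta_0(n+1)=c\big((g^M(\Theta_0(n)+K)+K)(4k+4)\big)^2$.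
   Context: In a CAT(0) space, $(1-\lambda)x+\lambda y$ denotes the point on the geodesic segment from $x$ to $y$ at distance $\lambda d(x,y)$ from $x$. $T:C\to C$ is $\lambda$-firmly nonexpansive if $d(Tx,Ty)\le d((1-\lambda)x+\lambda Tx,(1-\lambda)y+\lambda Ty)\le d(x,y)$ for all $x,y\in C$. II-modulus $\gamma$ for $C$: for every $k$ and every sequence $(y_n)$ in $C$ there are $0\le i<j\le\gamma(k)$ with $d(y_i,y_j)\le\frac1{k+1}$. For $f:\mathbb{N}\to\mathbb{N}$, $f^M(n):=\max\{f(i)\mid i\le n\}$. *)

(* Defs.v *)
From mathcomp Require Import all_boot all_order all_algebra.
From mathcomp Require Import reals.
Set Implicit Arguments. Unset Strict Implicit. Unset Printing Implicit Defensive.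
Import Order.TTheory GRing.Theory Num.Theory.
Local Open Scope ring_scope.

(* A CAT(0) space: a metric space (X, d) together with a geodesic selector
   W x y t = (1-t)x + t y (the point on the geodesic from x to y at distance
   t d(x,y) from x), such that t |-> W x y t is a geodesic on [0,1], and the
   Bruhat--Tits CN inequality holds (for midpoints).  A geodesic space
   satisfying CN is exactly a CAT(0) space. *)
Definition is_CAT0 (R : realType) (X : Type) (d : X -> X -> R)
  (W : X -> X -> R -> X) : Prop :=
  [/\ (forall x y, d x y = 0 <-> x = y) /\
      (forall x y, d x y = d y x),
      (forall x y z, d x z <= d x y + d y z),
      (forall x y s t, 0 <= s <= 1 -> 0 <= t <= 1 ->
         d (W x y s) (W x y t) = `|s - t| * d x y),
      (forall x y, W x y 0 = x /\ W x y 1 = y) &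
      (forall x y z, d z (W x y (2^-1)) ^+ 2 <=
         2^-1 * d z x ^+ 2 + 2^-1 * d z y ^+ 2 - 4^-1 * d x y ^+ 2)].

Definition firmly_nonexpansive (R : realType) (X : Type) (d : X -> X -> R)
  (W : X -> X -> R -> X) (C : X -> Prop) (lam : R) (T : X -> X) : Prop :=
  forall x y, C x -> C y ->
    d (T x) (T y) <= d (W x (T x) lam) (W y (T y) lam) /\
    d (W x (T x) lam) (W y (T y) lam) <= d x y.

Definition II_modulus (R : realType) (X : Type) (d : X -> X -> R)
  (C : X -> Prop) (gamma : nat -> nat) : Prop :=
  forall (k : nat) (y : nat -> X), (forall n, C (y n)) ->
    exists i j : nat, (i < j <= gamma k)%N /\ d (y i) (y j) <= (k.+1%:R)^-1.

Definition monmax (f : nat -> nat) (n : nat) : nat := \max_(i < n.+1) f i.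

Definition cconst (R : realType) (b lam : R) : nat :=
  `|Num.ceil (8 * (b + 1) ^+ 2 / (lam * (1 - lam)))|%N.

Fixpoint Theta0 (c K k : nat) (g : nat -> nat) (n : nat) : nat :=
  match n with
  | 0 => 0
  | n'.+1 => c * ((monmax g (Theta0 c K k g n' + K) + K) * (4 * k + 4)) ^ 2
  end%N.

(* Main.v *)
Require Import Defs.
From mathcomp Require Import all_boot all_order all_algebra.
From mathcomp Require Import reals.
From mathcomp Require Import ring lra zify.
Import Order.TTheory GRing.Theory Num.Theory.
Set Implicit Arguments. Unset Strict Implicit.
Local Open Scope ring_scope.


Section Geo.
Variables (R : realType) (X : Type) (d : X -> X -> R) (W : X -> X -> R -> X).
Hypothesis HC : is_CAT0 d W.

Lemma dsym x y : d x y = d y x.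
Proof. by case: HC => [[_ h] _ _ _ _]. Qed.
Lemma dtri x y z : d x z <= d x y + d y z.
Proof. by case: HC. Qed.
Lemma deq0 x y : d x y = 0 -> x = y.
Proof. by case: HC => [[h _] _ _ _ _] /h. Qed.
Lemma dxx x : d x x = 0.
Proof. by case: HC => [[h _] _ _ _ _]; apply/h. Qed.
Lemma dge0 x y : 0 <= d x y.
Proof. have := dtri x y x; rewrite dxx (dsym y x) => h; lra. Qed.
Lemma Wgeo x y s t : 0 <= s <= 1 -> 0 <= t <= 1 ->
  d (W x y s) (W x y t) = `|s - t| * d x y.
Proof. by case: HC => _ _ h _ _; apply: h. Qed.
Lemma W0 x y : W x y 0 = x. Proof. by case: HC => _ _ _ h _; case: (h x y). Qed.
Lemma W1 x y : W x y 1 = y. Proof. by case: HC => _ _ _ h _; case: (h x y). Qed.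
Lemma CN x y z : d z (W x y (2^-1)) ^+ 2 <=
         2^-1 * d z x ^+ 2 + 2^-1 * d z y ^+ 2 - 4^-1 * d x y ^+ 2.
Proof. by case: HC. Qed.

Lemma mid_unique a b m : d a m = 2^-1 * d a b -> d m b = 2^-1 * d a b ->
  W a b 2^-1 = m.
Proof.
move=> h1 h2; have := CN a b m; rewrite (dsym m a) h1 h2.
set D := d a b; set e := d m _ => h.
have he : e ^+ 2 <= 0 by move: h; nra.
have : e ^+ 2 == 0 by rewrite eq_le he sqr_ge0.
by rewrite sqrf_eq0 => /eqP /deq0 ->.
Qed.

Lemma geo_mid x y s s' : 0 <= s <= 1 -> 0 <= s' <= 1 -> s <= s' ->
  W (W x y s) (W x y s') 2^-1 = W x y ((s + s') / 2).
Proof.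
move=> hs hs' ss'; have ht : 0 <= (s + s') / 2 <= 1.
  by apply/andP; split; lra.
have e1 : `|s - s'| = s' - s by rewrite distrC ger0_norm // subr_ge0.
have e2 : `|s - (s + s') / 2| = (s' - s) / 2.
  have -> : s - (s + s') / 2 = - ((s' - s) / 2) by field.
  by rewrite normrN ger0_norm //; lra.
have e3 : `|(s + s') / 2 - s'| = (s' - s) / 2.
  have -> : (s + s') / 2 - s' = - ((s' - s) / 2) by field.
  by rewrite normrN ger0_norm //; lra.
apply: mid_unique; rewrite !Wgeo // ?e1 ?e2 ?e3.
all: try field; by [].
Qed.

Definition Fcn p x y (t : R) :=
  (1 - t) * d p x ^+ 2 + t * d p y ^+ 2 - t * (1 - t) * d x y ^+ 2.

Lemma cn_dyadic p x y n k : (k <= 2 ^ n)%N ->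
  d p (W x y (k%:R / 2 ^+ n)) ^+ 2 <= Fcn p x y (k%:R / 2 ^+ n).
Proof.
elim: n k => [|n IH] k.
  rewrite expn0 expr0 divr1 /Fcn; case: k => [|[|//]] _.
    by rewrite W0; lra.
  by rewrite W1; lra.
move=> hk; have [j [ek | ek]] : exists j, k = j.*2 \/ k = j.*2.+1.
    by exists k./2; move: (odd_double_half k); case: (odd k) => /= e; [right|left]; rewrite -{1}e.
  subst k; have -> : (j.*2)%:R / 2 ^+ n.+1 = j%:R / 2 ^+ n :> R.
    rewrite -muln2 natrM exprS; field; by rewrite ?expf_neq0 ?pnatr_eq0.
  apply: IH; move: hk; rewrite expnS -muln2; lia.
subst k.
have hj : (j < 2 ^ n)%N by move: hk; rewrite expnS -muln2; lia.
have h2 : (0 : R) < 2 ^+ n by rewrite exprn_gt0.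
have hs : 0 <= (j%:R : R) / 2 ^+ n <= 1.
  apply/andP; split; first by rewrite divr_ge0 // ltW.
  rewrite ler_pdivrMr // mul1r -natrX ler_nat; lia.
have hs' : 0 <= (j.+1%:R : R) / 2 ^+ n <= 1.
  apply/andP; split; first by rewrite divr_ge0 // ltW.
  rewrite ler_pdivrMr // mul1r -natrX ler_nat; lia.
have hle : j%:R / 2 ^+ n <= j.+1%:R / 2 ^+ n :> R.
  by rewrite ler_pM2r ?invr_gt0 // ler_nat.
have -> : (j.*2.+1)%:R / 2 ^+ n.+1 = (j%:R / 2 ^+ n + j.+1%:R / 2 ^+ n) / 2 :> R.
  rewrite -addn1 -muln2 !natrD natrM exprS; field.
  by rewrite gt_eqF.
rewrite -geo_mid //.
have := CN (W x y (j%:R / 2 ^+ n)) (W x y (j.+1%:R / 2 ^+ n)) p.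
rewrite Wgeo // distrC ger0_norm ?subr_ge0 //.
have := IH j (ltnW hj); have := IH j.+1 hj; rewrite /Fcn.
set s := j%:R / _; set s' := j.+1%:R / _.
set A := d p x; set B := d p y; set D := d x y.
set g1 := d p (W x y s); set g2 := d p (W x y s').
move=> e2 e1 e3; apply: le_trans e3 _.
nra.
Qed.

Lemma le0_of_small (E M : R) : 0 <= M -> (forall n, E <= M / 2 ^+ n) -> E <= 0.
Proof.
move=> M0 h; rewrite leNgt; apply/negP => E0.
set n := (Num.truncn (M / E)).+1.
have h1 : M / E < n%:R by apply: truncnS_gt.
have h2 : (n%:R : R) <= 2 ^+ n by rewrite -natrX ler_nat ltnW // ltn_expl.
have h3 := h n.
have p2 : (0 : R) < 2 ^+ n by rewrite exprn_gt0.
move: h3; rewrite ler_pdivlMr // => h3.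
move: h1; rewrite ltr_pdivrMr // => h1.
nra.
Qed.

Lemma cn_real p x y lam : 0 <= lam <= 1 ->
  d p (W x y lam) ^+ 2 <= Fcn p x y lam.
Proof.
move=> hl; rewrite -subr_le0.
set A := d p x; set B := d p y; set D := d x y.
have A0 : 0 <= A by apply: dge0.
have B0 : 0 <= B by apply: dge0.
have D0 : 0 <= D by apply: dge0.
apply: (@le0_of_small _ (2 * (A + D) * D + 2 * D ^+ 2 + A ^+ 2)); first by nra.
move=> n.
have p2 : (0 : R) < 2 ^+ n by rewrite exprn_gt0.
have l0 : 0 <= lam * 2 ^+ n by rewrite mulr_ge0 //; [case/andP: hl|apply: ltW].
set k := Num.truncn (lam * 2 ^+ n).
have [hk1 hk2] := andP (truncn_itv l0); rewrite -/k in hk1 hk2.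
have kle : (k <= 2 ^ n)%N.
  rewrite -(ler_nat R) natrX; apply: le_trans hk1 _.
  case/andP: hl => _ hl1; nra.
pose t := (k%:R : R) / 2 ^+ n.
have ht : 0 <= t <= 1.
  apply/andP; split; first by rewrite divr_ge0 // ltW.
  by rewrite ler_pdivrMr // mul1r -natrX ler_nat.
have tle : t <= lam by rewrite ler_pdivrMr.
have lat : lam - t <= 1 / 2 ^+ n.
  rewrite ler_pdivlMr // mulrBl /t divfK ?gt_eqF //; move: hk2; rewrite -natr1; lra.
have hd := @cn_dyadic p x y n k kle; rewrite -/t /Fcn -/A -/B -/D in hd.
set rho := d p (W x y t); set h := d p (W x y lam).
have rho0 : 0 <= rho by apply: dge0.
have h0 : 0 <= h by apply: dge0.
have hh : h <= rho + (lam - t) * D.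
  have := dtri p (W x y t) (W x y lam); rewrite Wgeo // distrC ger0_norm ?subr_ge0 //.
have hr : rho <= A + D.
  have e : d x (W x y t) = t * D.
    rewrite -{1}(W0 x y) Wgeo //; last by rewrite lexx ler01.
    by rewrite sub0r normrN ger0_norm //; case/andP: ht.
  have := dtri p x (W x y t); rewrite e -/rho.
  case/andP: ht => _ ht1 h1; apply: (le_trans h1); rewrite lerD2l; nra.
set del := lam - t.
have del0 : 0 <= del by rewrite subr_ge0.
have del1 : del <= 1 by move: (ht) (hl) => /andP[? ?] /andP[? ?]; rewrite /del; lra.
have -> : Fcn p x y lam = (1 - t) * A ^+ 2 + t * B ^+ 2 - t * (1 - t) * D ^+ 2
   - del * (A ^+ 2 - B ^+ 2) - D ^+ 2 * del * (1 - t - lam).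
  rewrite /Fcn -/A -/B -/D /del; ring.
have : h ^+ 2 <= (rho + del * D) ^+ 2.
  by rewrite ler_sqr ?nnegrE //; nra.
have : del <= 1 / 2 ^+ n by [].
case/andP: ht => t0 t1; case/andP: hl => l0' l1.
set M := 2 * (A + D) * D + 2 * D ^+ 2 + A ^+ 2.
have M0 : 0 <= M by rewrite /M; nra.
move=> hdel hsq.
have hM : del * M <= 1 / 2 ^+ n * M by rewrite ler_wpM2r.
have -> : M / 2 ^+ n = 1 / 2 ^+ n * M by rewrite mul1r mulrC.
have q1 : 2 * rho * del * D <= 2 * (A + D) * del * D.
  have : 0 <= (A + D - rho) * del * D by rewrite !mulr_ge0 // subr_ge0.
  nra.
have q2 : del ^+ 2 * D ^+ 2 <= del * D ^+ 2.
  have : 0 <= (1 - del) * del * D ^+ 2 by rewrite !mulr_ge0 ?sqr_ge0 // subr_ge0.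
  nra.
have q3 : del * (A ^+ 2 - B ^+ 2) <= del * A ^+ 2.
  have : 0 <= del * B ^+ 2 by rewrite mulr_ge0 ?sqr_ge0.
  nra.
have q4 : D ^+ 2 * del * (1 - t - lam) <= D ^+ 2 * del.
  have hh2 : 0 <= D ^+ 2 * del by rewrite mulr_ge0 ?sqr_ge0.
  have : 0 <= D ^+ 2 * del * (t + lam) by apply: mulr_ge0 => //; lra.
  nra.
have q5 : (rho + del * D) ^+ 2 = rho ^+ 2 + 2 * rho * del * D + del ^+ 2 * D ^+ 2 by ring.
have q6 : del * M = 2 * (A + D) * del * D + del * D ^+ 2 + del * A ^+ 2 + D ^+ 2 * del.
  rewrite /M; ring.
rewrite q5 in hsq.
have hd' : rho ^+ 2 <= (1 - t) * A ^+ 2 + t * B ^+ 2 - t * (1 - t) * D ^+ 2 := hd.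
lra.
Qed.
End Geo.


Section Dyn.
Variables (R : realType) (X : Type) (d : X -> X -> R) (W : X -> X -> R -> X).
Variables (C : X -> Prop) (b lam : R) (T : X -> X).
Hypothesis HC : is_CAT0 d W.
Hypothesis Hb : forall u v, C u -> C v -> d u v <= b.
Hypothesis hlam : 0 < lam < 1.
Hypothesis HT : forall u, C u -> C (T u).
Hypothesis Hfne : firmly_nonexpansive d W C lam T.

Lemma iterC x n : C x -> C (iter n T x).
Proof. by move=> Cx; elim: n => //= n IH; apply: HT. Qed.

Lemma Tnonexp u v : C u -> C v -> d (T u) (T v) <= d u v.
Proof. by move=> Cu Cv; have [h1 h2] := Hfne Cu Cv; apply: le_trans h1 h2. Qed.

Lemma fix_ineq p u : C p -> T p = p -> C u ->
  d (T u) p ^+ 2 <= d u p ^+ 2 - lam * d u (T u) ^+ 2.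
Proof.
move=> Cp Tp Cu.
have [h1 _] := Hfne Cu Cp; rewrite Tp in h1.
have Wpp : W p p lam = p.
  case/andP: hlam => l0 l1.
  apply: (deq0 HC); rewrite -{3}(W0 HC p p) (Wgeo HC) ?(dxx HC) ?mulr0 //.
    by apply/andP; split; lra.
  by rewrite lexx ler01.
rewrite Wpp in h1.
case/andP: hlam => l0 l1.
have hc := @cn_real R X d W HC p u (T u) lam
  (introT andP (conj (ltW l0) (ltW l1))).
rewrite /Fcn in hc.
rewrite (dsym HC (T u) p) (dsym HC u p) in h1 *.
set A := d p u in hc *; set B := d p (T u) in hc h1 *; set D := d u (T u) in hc *.
set w := d p (W u (T u) lam) in hc.
have hw : d (W u (T u) lam) p = w by rewrite (dsym HC).
rewrite hw in h1.
have B0 : 0 <= B by apply: (dge0 HC).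
have hB : B ^+ 2 <= w ^+ 2 by rewrite ler_sqr ?nnegrE //; apply: le_trans h1.
nra.
Qed.

Definition res x n := d (iter n T x) (T (iter n T x)).

Lemma res_dec x n : C x -> res x n.+1 <= res x n.
Proof. by move=> Cx; rewrite /res iterS; apply: Tnonexp; [apply: iterC|apply: HT; apply: iterC]. Qed.

Lemma key x p n : C x -> C p -> T p = p ->
  d (iter n T x) p ^+ 2 + lam * n%:R * res x n ^+ 2 <= d x p ^+ 2.
Proof.
move=> Cx Cp Tp; elim: n => [|n IH]; first by rewrite mulr0 mul0r addr0.
apply: le_trans IH; rewrite iterS.
have h1 := fix_ineq Cp Tp (iterC n Cx).
have h2 := res_dec n Cx.
have r0 : 0 <= res x n.+1 by apply: (dge0 HC).
have h3 : res x n.+1 ^+ 2 <= res x n ^+ 2 by rewrite ler_sqr ?nnegrE //; apply: (dge0 HC).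
rewrite /res in h1 h2 h3 r0 *; rewrite iterS in h2 h3 r0 *.
set a := d (T (iter n T x)) p in h1 *.
set r1 := d (T (iter n T x)) (T (T (iter n T x))) in h2 h3 r0 *.
set r := d (iter n T x) (T (iter n T x)) in h1 h2 h3 *.
rewrite -natr1.
case/andP: hlam => l0 l1.
have : 0 <= lam * n%:R * (r ^+ 2 - r1 ^+ 2) by rewrite mulr_ge0 ?mulr_ge0 ?subr_ge0 // ltW.
nra.
Qed.


Lemma cconst_ge : (1 + b) ^+ 2 <= lam * (cconst b lam)%:R.
Proof.
case/andP: hlam => l0 l1.
set Q := 8 * (b + 1) ^+ 2 / (lam * (1 - lam)).
have Q0 : 0 <= Q.
  apply: divr_ge0; first by rewrite mulr_ge0 ?sqr_ge0.
  by apply: mulr_ge0; lra.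
have hc : Q <= (cconst b lam)%:R.
  rewrite /cconst natr_absz ger0_norm; first exact: ceil_ge.
  by rewrite ceil_ge0 -/Q; lra.
have lQ : lam * Q = 8 * (b + 1) ^+ 2 / (1 - lam).
  by rewrite /Q; field; apply/andP; split; rewrite ?gt_eqF ?subr_gt0.
have : (1 + b) ^+ 2 <= lam * Q.
  rewrite lQ ler_pdivlMr ?subr_gt0 //.
  have : 0 <= (b + 1) ^+ 2 by apply: sqr_ge0.
  rewrite [1 + b]addrC; nra.
move=> h; apply: le_trans h _; rewrite ler_pM2l //.
Qed.

Lemma reg x p (L n : nat) : C x -> C p -> T p = p -> (0 < L)%N ->
  (cconst b lam * L ^ 2 <= n)%N -> res x n <= L%:R^-1.
Proof.
move=> Cx Cp Tp L0 hn.
have hk := key n Cx Cp Tp.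
have hb : d x p <= b := Hb Cx Cp.
have dp0 : 0 <= d x p := dge0 HC x p.
have di0 : 0 <= d (iter n T x) p := dge0 HC _ p.
have r0 : 0 <= res x n := dge0 HC _ _.
have hc := cconst_ge.
have hn' : (cconst b lam)%:R * L%:R ^+ 2 <= n%:R :> R.
  by rewrite -natrX -natrM ler_nat.
have L1 : (1 : R) <= L%:R by rewrite ler1n.
case/andP: hlam => l0 l1.
rewrite -[res x n]mulr1 -[X in _ * X](@mulfV _ L%:R) ?gt_eqF //; last by lra.
rewrite mulrA ler_piMl ?invr_ge0 ?ler0n //.
rewrite leNgt; apply/negP => hr.
set r := res x n in hk r0 hr.
set c := (cconst b lam)%:R in hc hn'.
set l := L%:R in hn' L1 hr.
have h1 : (1 + b) ^+ 2 * l ^+ 2 <= lam * n%:R.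
  have : lam * (c * l ^+ 2) <= lam * n%:R by rewrite ler_pM2l.
  have : 0 <= l ^+ 2 by apply: sqr_ge0.
  nra.
have h2 : 1 < (r * l) ^+ 2 by rewrite -[1](expr1n _ 2) ltrXn2r // ltW.
have h3 : (1 + b) ^+ 2 * (r * l) ^+ 2 <= lam * n%:R * r ^+ 2.
  have : 0 <= r ^+ 2 by apply: sqr_ge0.
  rewrite exprMn; nra.
have h4 : d x p ^+ 2 <= b ^+ 2 by rewrite ler_sqr ?nnegrE //; lra.
have : 0 <= d (iter n T x) p ^+ 2 by apply: sqr_ge0.
have : 0 <= b by lra.
nra.
Qed.

Lemma approx q z r : C q -> C z ->
  d (iter r T z) q <= d z q + r%:R * d q (T q).
Proof.
move=> Cq Cz; elim: r => [|r IH]; first by rewrite mul0r addr0.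
rewrite iterS -natr1.
have h1 : d (T (iter r T z)) (T q) <= d (iter r T z) q by apply: Tnonexp => //; apply: iterC.
have h2 := dtri HC (T (iter r T z)) (T q) q.
rewrite (dsym HC (T q) q) in h2; lra.
Qed.
End Dyn.


Lemma monmax_ge (f : nat -> nat) i n : (i <= n)%N -> (f i <= monmax f n)%N.
Proof.
move=> hi; rewrite /monmax.
have hi' : (i < n.+1)%N by [].
exact: (@leq_bigmax _ (fun j : 'I_n.+1 => f j) (Ordinal hi')).
Qed.

Lemma monmax_mono (f : nat -> nat) n m : (n <= m)%N -> (monmax f n <= monmax f m)%N.
Proof.
move=> hnm; rewrite {1}/monmax; apply/bigmax_leqP => i _.
apply: monmax_ge; have := ltn_ord i; lia.
Qed.

Lemma Theta0_S c K k g n : (Theta0 c K k g n <= Theta0 c K k g n.+1)%N.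
Proof.
elim: n => [|n IH] //.
rewrite [Theta0 _ _ _ _ n.+2]/= [Theta0 _ _ _ _ n.+1]/=.
apply: leq_mul => //; rewrite leq_sqr; apply: leq_mul => //; rewrite leq_add2r.
by apply: monmax_mono; rewrite leq_add2r.
Qed.

Lemma Theta0_mono c K k g n m : (n <= m)%N ->
  (Theta0 c K k g n <= Theta0 c K k g m)%N.
Proof.
elim: m => [|m IH]; first by rewrite leqn0 => /eqP ->.
rewrite leq_eqVlt => /orP [/eqP -> //|]; rewrite ltnS => /IH h.
exact: leq_trans h (Theta0_S _ _ _ _ _).
Qed.

Unset Implicit Arguments.
Theorem corollary7p9 (R : realType) (X : Type) (d : X -> X -> R)
  (W : X -> X -> R -> X) (C : X -> Prop) (gamma : nat -> nat) (b lam : R)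
  (T : X -> X) (x : X) :
  is_CAT0 d W ->
  II_modulus d C gamma ->
  0 < b -> (forall u v, C u -> C v -> d u v <= b) ->
  0 < lam < 1 ->
  (forall u, C u -> C (T u)) ->
  firmly_nonexpansive d W C lam T ->
  (exists p, C p /\ T p = p) ->
  C x ->
  forall (k : nat) (g : nat -> nat),
    let c := cconst b lam in
    let K := (c * k.+1 ^ 2)%N in
    exists N : nat,
      (N <= Theta0 c K k g (monmax gamma (4 * k + 3)) + K)%N /\
      (forall i j : nat, (N <= i <= N + g N)%N -> (N <= j <= N + g N)%N ->
         d (iter i T x) (iter j T x) <= (k.+1%:R)^-1) /\
      (forall m : nat, (N <= m)%N ->
         d (iter m T x) (T (iter m T x)) <= (k.+1%:R)^-1).
Proof.
move=> HCAT Hmod b0 Hb hlam HT Hfne [p [Cp Tp]] Cx k g c K.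
pose Th := Theta0 c K k g.
pose y l := iter (Th l + K) T x.
have Cy l : C (y l) by apply: iterC.
have [i [j [hij hyij]]] := Hmod (4*k+3)%N y Cy.
case/andP: hij => hij hjg.
have regK : forall m, (K <= m)%N -> res d T x m <= (k.+1%:R)^-1.
  by move=> m hm; apply: (reg HCAT Hb hlam HT Hfne (L:=k.+1) Cx Cp Tp).
exists (Th i + K)%N; split; [|split].
- rewrite leq_add2r; apply: Theta0_mono.
  apply: leq_trans (monmax_ge gamma (leqnn _)); apply: leq_trans hjg; exact: ltnW.
- move=> a a' ha ha'.
  pose N := (Th i + K)%N.
  pose q := y j.
  pose e := (((4*k+3).+1)%:R : R)^-1.
  have e0 : 0 < e by rewrite invr_gt0 ltr0n.
  have hq : forall m, (N <= m <= N + g N)%N -> d (iter m T x) q <= e + e.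
    move=> m /andP[h1 h2].
    have -> : m = ((m - N) + N)%N by lia.
    rewrite iterD.
    have hr : (m - N <= g N)%N by lia.
    move: (m - N)%N hr => r hr.
    have ha1 := approx HCAT HT Hfne r (Cy j) (Cy i).
    have hyij' : d (y i) q <= e := hyij.
    have : r%:R * d q (T q) <= e.
      case: (posnP r) => [-> | rpos]; first by rewrite mul0r ltW.
      pose L := ((monmax g N + K) * (4*k+4))%N.
      have Lpos : (0 < L)%N.
        rewrite /L muln_gt0 addn_gt0; apply/andP; split; last by lia.
        apply/orP; left; apply: leq_trans rpos _; apply: leq_trans hr _.
        exact: monmax_ge.
      have hTh : (c * L ^ 2 <= Th j + K)%N.
        apply: leq_trans (leq_addr _ _); rewrite /L.
        have -> : (c * ((monmax g N + K) * (4 * k + 4)) ^ 2)%N = Th i.+1 by [].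
        exact: Theta0_mono.
      have hdel : d q (T q) <= L%:R^-1.
        exact: (reg HCAT Hb hlam HT Hfne (L:=L) (n:=(Th j + K)%N) Cx Cp Tp Lpos hTh).
      have hrL : (r * (4*k+4) <= L)%N.
        rewrite /L leq_mul2r; apply/orP; right.
        apply: leq_trans (leq_addr _ _); apply: leq_trans hr _; exact: monmax_ge.
      have hrL' : (r%:R : R) * (4*k+4)%:R <= L%:R by rewrite -natrM ler_nat.
      have e4 : e * (4*k+4)%:R = 1.
        rewrite /e (_ : (4*k+3).+1 = 4*k+4)%N; last by lia.
        by rewrite mulVf // pnatr_eq0; lia.
      have Lp : (0 : R) < L%:R by rewrite ltr0n.
      have uL : L%:R^-1 * L%:R = 1 :> R by rewrite mulVf // gt_eqF.
      have u0 : (0 : R) <= L%:R^-1 by rewrite invr_ge0 ltW.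
      have d0 : 0 <= d q (T q) by apply: (dge0 HCAT).
      have r0 : (0 : R) <= r%:R by apply: ler0n.
      have s1 : r%:R * d q (T q) <= r%:R * L%:R^-1 by rewrite ler_wpM2l.
      have s2 : r%:R * (4*k+4)%:R * (e * L%:R^-1) <= L%:R * (e * L%:R^-1).
        by rewrite ler_wpM2r // mulr_ge0 // ltW.
      nra.
    lra.
  have h1 := hq a ha; have h2 := hq a' ha'.
  have := dtri HCAT (iter a T x) q (iter a' T x).
  rewrite (dsym HCAT q).
  have -> : (k.+1%:R : R)^-1 = 4 * e.
    rewrite /e (_ : (4*k+3).+1 = 4 * k.+1)%N; last by lia.
    rewrite natrM invfM mulrA mulfV ?mul1r // pnatr_eq0 //.
  lra.
- move=> m hm; apply: regK; apply: leq_trans hm; exact: leq_addl.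
Qed.
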